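(* Let $N$ be an odd positive integer and $r\ge s\ge2$. The map $\Gamma_1(N2^r)^{\mathrm{ab}}\to(\Phi_r^s)^{\mathrm{ab}}$ induced by inclusion commutes with the Atkin operators $U$, and its cokernel is identified with $\Gamma_s/\Gamma_r$ via $\begin{pmatrix}a&b\\c&d\end{pmatrix}\mapsto d\bmod\Gamma_r$. The endomorphism of $\Gamma_s/\Gamma_r$ induced by $U$ is multiplication by $2$ (in additive notation for the abelian group $\Gamma_s/\Gamma_r$, i.e. $x\mapsto x^2$ multiplicatively).
   Context: For $M\ge1$, $\Gamma_1(M)=\{\begin{pmatrix}a&b\\c&d\end{pmatrix}\in\mathrm{SL}_2(\mathbb{Z}) : c\equiv0,\ a\equiv d\equiv1 \pmod M\}$, $\Gamma_0(M)=\{c\equiv 0\pmod M\}$, $\Gamma^0(2)=\{b\equiv0\pmod 2\}$ (all inside $\mathrm{SL}_2(\mathbb{Z})$). For $r\ge s\ge2$, $\Phi_r^s:=\Gamma_1(N2^s)\cap\Gamma_0(2^r)$, so $\Phi_r^r=\Gamma_1(N2^r)$; $G^{\mathrm{ab}}$ denotes abelianization. $\Gamma_r:=1+2^r\mathbb{Z}_2\subset\mathbb{Z}_2^\times$. Let $t=\begin{pmatrix}1&0\\0&2\end{pmatrix}$; $x\mapsto txt^{-1}$ is an isomorphism $\Phi_r^s\cap\Gamma^0(2)\to\Phi_{r+1}^s$. The Atkin operator $U$ on $(\Phi_r^s)^{\mathrm{ab}}$ is the composite of the transfer $(\Phi_r^s)^{\mathrm{ab}}\to(\Phi_r^s\cap\Gamma^0(2))^{\mathrm{ab}}$,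 the map induced by $x\mapsto txt^{-1}$ to $(\Phi_{r+1}^s)^{\mathrm{ab}}$, and the inclusion-induced map $(\Phi_{r+1}^s)^{\mathrm{ab}}\to(\Phi_r^s)^{\mathrm{ab}}$. *)

(* Defs.v *)
From mathcomp Require Import all_boot all_order all_algebra.
Set Implicit Arguments. Unset Strict Implicit. Unset Printing Implicit Defensive.
Import Order.TTheory GRing.Theory Num.Theory.
Local Open Scope ring_scope.

Definition Mat := 'M[int]_2.

Definition i0 : 'I_2 := @ord0 1.
Definition i1 : 'I_2 := @ord_max 1.
Definition ea (g : Mat) : int := g i0 i0.
Definition eb (g : Mat) : int := g i0 i1.
Definition ec (g : Mat) : int := g i1 i0.
Definition ed (g : Mat) : int := g i1 i1.

Definition SL2 (g : Mat) : bool := \det g == 1.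
Definition Gamma1 (M : nat) (g : Mat) : bool :=
  [&& SL2 g, (M%:Z %| ec g)%Z, (M%:Z %| ea g - 1)%Z & (M%:Z %| ed g - 1)%Z].
Definition Gamma0 (M : nat) (g : Mat) : bool := SL2 g && (M%:Z %| ec g)%Z.
Definition Gamma0up2 (g : Mat) : bool := SL2 g && (2 %| eb g)%Z.
Definition Phi (N r s : nat) (g : Mat) : bool :=
  Gamma1 (N * 2 ^ s) g && Gamma0 (2 ^ r) g.

Inductive comm_sub (G : pred Mat) : Mat -> Prop :=
| comm_sub1 : comm_sub G 1
| comm_subM (x y z : Mat) : G x -> G y -> comm_sub G z ->
    comm_sub G (x^-1 * y^-1 * x * y * z).

(* x and y (elements of G) have the same image in G^ab *)
Definition ab_eq (G : pred Mat) (x y : Mat) : Prop := comm_sub G (x * y^-1).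

Definition sub0up2 (G : pred Mat) : pred Mat := fun x => G x && Gamma0up2 x.

Definition right_transv (G H : pred Mat) (ts : seq Mat) : Prop :=
  all G ts /\ forall g, G g -> count (fun t => H (g * t^-1)) ts = 1%N.

(* Transfer G -> H^ab computed with the right transversal ts:
   product over t_i in ts of t_i g t_{sigma i}^-1, where t_{sigma i} is the
   representative of the coset H t_i g.  (Result well defined modulo [H,H].) *)
Definition transfer (H : pred Mat) (ts : seq Mat) (g : Mat) : Mat :=
  \prod_(t <- ts)
     (t * g * (nth 1 ts (find (fun u => H (t * g * u^-1)) ts))^-1).

(* x |-> t x t^-1 with t = diag(1,2), for x with even upper-right entry:
   (a b; c d) |-> (a b/2; 2c d). *)
Definition conj_t (x : Mat) : Mat :=
  \matrix_(i < 2, j < 2)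
    (if i == i0 then (if j == i0 then ea x else (eb x %/ 2)%Z)
     else (if j == i0 then 2 * ec x else ed x)).

(* The Atkin operator U on G^ab (G = Phi_r^s), computed with a right
   transversal ts of G cap Gamma^0(2) in G; followed by the inclusion
   Phi_{r+1}^s -> Phi_r^s, which is the identity on matrices. *)
Definition AtkinU (G : pred Mat) (ts : seq Mat) (g : Mat) : Mat :=
  conj_t (transfer (sub0up2 G) ts g).

(* Main.v *)
Set Warnings "-notation-overridden,-ambiguous-paths".
Require Import Defs.
From mathcomp Require Import all_boot all_order all_algebra zify ring lra.
Import Order.TTheory GRing.Theory Num.Theory.
Local Open Scope ring_scope.
Set Implicit Arguments. Unset Strict Implicit. Unset Printing Implicit Defensive.

Lemma liftL (i : 'I_2) (j : 'I_1) : lift i j = if val i == 0%N then i1 else i0.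
Proof. apply/val_inj; case: i => [[|[|]]] //= _; case: j => [[|]] //. Qed.

Lemma detE (x : Mat) : \det x = ea x * ed x - eb x * ec x.
Proof.
rewrite (expand_det_row _ i0) big_ord_recl big_ord1 /cofactor !det_mx11 /=.
rewrite !mxE /= !liftL /= /ea /ed /eb /ec /= expr0 expr1; ring.
Qed.

Lemma mulE (x y : Mat) :
  [/\ ea (x * y) = ea x * ea y + eb x * ec y,
      eb (x * y) = ea x * eb y + eb x * ed y,
      ec (x * y) = ec x * ea y + ed x * ec y &
      ed (x * y) = ec x * eb y + ed x * ed y].
Proof.
by rewrite /ea /eb /ec /ed -mulmxE !mxE !big_ord_recl !big_ord0 !addr0 /= !liftL.
Qed.

Definition mk (a b c d : int) : Mat :=
  \matrix_(i < 2, j < 2)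
    (if i == i0 then (if j == i0 then a else b)
     else (if j == i0 then c else d)).

Lemma mkE a b c d :
  [/\ ea (mk a b c d) = a, eb (mk a b c d) = b, ec (mk a b c d) = c &
      ed (mk a b c d) = d].
Proof. by rewrite /ea /eb /ec /ed !mxE. Qed.

Lemma ord2P (i : 'I_2) : i = i0 \/ i = i1.
Proof. case: i => [[|[|//]]] H; [left|right]; exact/val_inj. Qed.

Lemma matP (x y : Mat) : ea x = ea y -> eb x = eb y -> ec x = ec y ->
  ed x = ed y -> x = y.
Proof.
move=> ha hb hc hd; apply/matrixP => i j.
by case: (ord2P i) => ->; case: (ord2P j) => ->.
Qed.

Lemma oneE : [/\ ea 1 = 1, eb 1 = 0, ec 1 = 0 & ed 1 = 1].
Proof. by rewrite /ea /eb /ec /ed !mxE. Qed.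

Lemma conj_tE x : conj_t x = mk (ea x) (eb x %/ 2)%Z (2 * ec x) (ed x).
Proof. by []. Qed.

Lemma SLu x : SL2 x -> x \is a GRing.unit.
Proof. by move=> /eqP h; rewrite unitmxE h unitr1. Qed.

Lemma SLdet x : SL2 x -> ea x * ed x - eb x * ec x = 1.
Proof. by move=> /eqP; rewrite detE. Qed.

Lemma SLP x : ea x * ed x - eb x * ec x = 1 -> SL2 x.
Proof. by move=> h; rewrite /SL2 detE h. Qed.

Definition adj2 (x : Mat) := mk (ed x) (- eb x) (- ec x) (ea x).

Lemma invE x : SL2 x -> x^-1 = adj2 x.
Proof.
move=> h; have u := SLu h.
have e : x * adj2 x = 1.
  have := SLdet h; case: (mulE x (adj2 x)) => h1 h2 h3 h4.
  case: (mkE (ed x) (- eb x) (- ec x) (ea x)) => k1 k2 k3 k4.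
  case: oneE => o1 o2 o3 o4 hd.
  apply: matP; rewrite ?h1 ?h2 ?h3 ?h4 /adj2 ?k1 ?k2 ?k3 ?k4 ?o1 ?o2 ?o3 ?o4;
    rewrite -?hd; ring.
by rewrite -[RHS](mulKr u) e mulr1.
Qed.

Lemma invEs x : SL2 x ->
  [/\ ea x^-1 = ed x, eb x^-1 = - eb x, ec x^-1 = - ec x & ed x^-1 = ea x].
Proof. by move=> h; rewrite invE //; apply: mkE. Qed.

Lemma SLM x y : SL2 x -> SL2 y -> SL2 (x * y).
Proof. by rewrite /SL2 -mulmxE det_mulmx => /eqP -> /eqP ->; rewrite mulr1. Qed.

Lemma SLV x : SL2 x -> SL2 x^-1.
Proof.
move=> h; apply: SLP; case: (invEs h) => -> -> -> ->.
by rewrite -(SLdet h); ring.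
Qed.

Lemma SL1 : SL2 1.
Proof. by rewrite /SL2 det1. Qed.

Lemma dvdzD d m n : (d %| m)%Z -> (d %| n)%Z -> (d %| m + n)%Z.
Proof. exact: rpredD. Qed.
Lemma dvdzN d m : (d %| - m)%Z = (d %| m)%Z.
Proof. exact: rpredN. Qed.
Lemma dvdzB d m n : (d %| m)%Z -> (d %| n)%Z -> (d %| m - n)%Z.
Proof. exact: rpredB. Qed.
Ltac dz := first [done | by apply: dvdz_mulr | by apply: dvdz_mull
  | apply: dvdzD; dz | rewrite dvdzN; dz].
Lemma G1M M x y : Gamma1 M x -> Gamma1 M y -> Gamma1 M (x * y).
Proof.
case/and4P=> sx cx ax dx /and4P[sy cy ay dy].
rewrite /Gamma1 SLM //=; case: (mulE x y) => -> _ -> ->.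
have -> : ea x * ea y + eb x * ec y - 1 = (ea x - 1) * ea y + (ea y - 1) + eb x * ec y by ring.
have -> : ec x * eb y + ed x * ed y - 1 = (ed x - 1) * ed y + (ed y - 1) + ec x * eb y by ring.
by apply/and3P; split; dz.
Qed.

Lemma G1V M x : Gamma1 M x -> Gamma1 M x^-1.
Proof.
case/and4P=> sx cx ax dx; rewrite /Gamma1 SLV //.
case: (invEs sx) => -> _ -> ->; by rewrite dvdzN cx ax dx.
Qed.

Lemma G0M M x y : Gamma0 M x -> Gamma0 M y -> Gamma0 M (x * y).
Proof.
case/andP=> sx cx /andP[sy cy].
rewrite /Gamma0 SLM //=; case: (mulE x y) => _ _ -> _.
dz.
Qed.

Lemma G0V M x : Gamma0 M x -> Gamma0 M x^-1.
Proof.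
case/andP=> sx cx; rewrite /Gamma0 SLV //.
by case: (invEs sx) => _ _ -> _; rewrite dvdzN cx.
Qed.

Lemma PhiM N r s x y : Phi N r s x -> Phi N r s y -> Phi N r s (x * y).
Proof. by case/andP=> ? ? /andP[? ?]; rewrite /Phi G1M ?G0M. Qed.

Lemma PhiV N r s x : Phi N r s x -> Phi N r s x^-1.
Proof. by case/andP=> ? ?; rewrite /Phi G1V ?G0V. Qed.

Lemma G1one M : Gamma1 M 1.
Proof. by case: oneE => a b c d; rewrite /Gamma1 SL1 c a d subrr dvdz0. Qed.

Lemma G0one M : Gamma0 M 1.
Proof. by case: oneE => a b c d; rewrite /Gamma0 SL1 c dvdz0. Qed.

Lemma Phione N r s : Phi N r s 1.
Proof. by rewrite /Phi G1one G0one. Qed.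

Definition Tm : Mat := mk 1 1 0 1.
Definition ev (x : Mat) : bool := (2 %| eb x)%Z.

Lemma evV x : SL2 x -> ev x^-1 = ev x.
Proof. by move=> h; rewrite /ev; case: (invEs h) => _ -> _ _; rewrite dvdzN. Qed.
Lemma ev1 : ev 1.
Proof. by case: oneE => _ b _ _; rewrite /ev b dvdz0. Qed.
Lemma evT : ~~ ev Tm.
Proof. by case: (mkE 1 1 0 1) => _ b _ _; rewrite /ev /Tm b. Qed.
Lemma SLT : SL2 Tm.
Proof. by apply: SLP; case: (mkE 1 1 0 1) => -> -> -> ->. Qed.

Section Grp.
Variable G : pred Mat.
Hypotheses (G1 : G 1) (GM : forall x y, G x -> G y -> G (x*y))
  (GV : forall x, G x -> G x^-1) (GS : forall x, G x -> SL2 x)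
  (Ga : forall x, G x -> (2 %| ea x - 1)%Z)
  (Gd : forall x, G x -> (2 %| ed x - 1)%Z) (GT : G Tm).

Lemma Kev x : sub0up2 G x = G x && ev x.
Proof. by rewrite /sub0up2 /Gamma0up2; case Gx: (G x) => //=; rewrite GS. Qed.

Lemma ev_mul x y : G x -> G y -> ev (x * y) = (ev x == ev y).
Proof.
move=> gx gy; rewrite /ev; case: (mulE x y) => _ -> _ _.
have /dvdzP[p hp] := Ga gx; have /dvdzP[q hq] := Gd gy.
have -> : ea x = p * 2 + 1 by rewrite -hp; ring.
have -> : ed y = q * 2 + 1 by rewrite -hq; ring.
have -> : (p * 2 + 1) * eb y + eb x * (q * 2 + 1) =
  2 * (p * eb y + eb x * q) + eb y + eb x by ring.
move: (p * eb y + eb x * q) => w; lia.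
Qed.

Lemma Kdiv x y : G x -> G y -> sub0up2 G (x * y^-1) = (ev x == ev y).
Proof. by move=> gx gy; rewrite Kev GM ?GV //= ev_mul ?GV // evV ?GS. Qed.

Lemma transv_shape ts : right_transv G (sub0up2 G) ts ->
  exists u v, [/\ ts = [:: u; v], G u, G v & ev u = ~~ ev v].
Proof.
case=> /allP allG hc.
have c1 := hc 1 G1; have cT := hc Tm GT.
rewrite (@eq_in_count _ _ ev) in c1; last first.
  by move=> t /allG gt; rewrite mul1r Kev GV //= evV ?GS.
rewrite (@eq_in_count _ _ (predC ev)) in cT; last first.
  by move=> t /allG gt; rewrite Kdiv //= (negbTE evT); case: (ev t).
have sz := count_predC ev ts; rewrite c1 cT in sz.
move: ts sz allG c1 {hc cT} => [|u [|v [|]]] //= _ allG c1.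
exists u, v; split => //; try (apply: allG; rewrite !inE eqxx ?orbT //).
by move: c1; case: (ev u); case: (ev v).
Qed.

Lemma transfer_shape ts g : right_transv G (sub0up2 G) ts -> G g ->
  exists u v, [/\ G u, G v, ev u = ~~ ev v &
    transfer (sub0up2 G) ts g =
      if ev g then (u * g * u^-1) * (v * g * v^-1) else u * (g * g) * u^-1].
Proof.
move=> /transv_shape [u [v [-> gu gv evu]]] gg.
have kd t w : G t -> G w -> sub0up2 G (t * g * w^-1) = ((ev t == ev g) == ev w).
  by move=> gt gw; rewrite Kdiv ?GM // ev_mul.
exists u, v; split => //.
rewrite /transfer big_cons big_cons big_nil mulr1 /= !kd // evu.
case: (ev g); case: (ev v) => //=.
- by rewrite !mulrA mulrVK ?SLu ?GS // -!mulrA.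
- by rewrite !mulrA mulrVK ?SLu ?GS // -!mulrA.
Qed.
End Grp.

Section Comm.
Variable K : pred Mat.
Hypotheses (K1 : K 1) (KM : forall x y, K x -> K y -> K (x*y))
  (KV : forall x, K x -> K x^-1) (KS : forall x, K x -> SL2 x).

Let Ku x : K x -> x \is a GRing.unit.
Proof. by move=> /KS /SLu. Qed.

Lemma csK z : comm_sub K z -> K z.
Proof. by elim=> // x y w kx ky _ kw; rewrite !KM ?KV. Qed.

Lemma cs_comm x y : K x -> K y -> comm_sub K (x^-1 * y^-1 * x * y).
Proof. by move=> kx ky; have := comm_subM kx ky (comm_sub1 K); rewrite mulr1. Qed.

Lemma cs_mul x y : comm_sub K x -> comm_sub K y -> comm_sub K (x * y).
Proof.
elim=> [|a b z ka kb _ IH] cy; rewrite ?mul1r //.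
have -> : a^-1 * b^-1 * a * b * z * y = a^-1 * b^-1 * a * b * (z * y) by rewrite mulrA.
by constructor; auto.
Qed.

Lemma inv_uniq (x y : Mat) : x \is a GRing.unit -> x * y = 1 -> x^-1 = y.
Proof. by move=> u e; rewrite -[RHS](mulKr u) e mulr1. Qed.

Lemma cs_inv z : comm_sub K z -> comm_sub K z^-1.
Proof.
elim=> [|x y w kx ky cw IH]; first by rewrite invr1; constructor.
have kw := csK cw; have ux := Ku kx; have uy := Ku ky; have uw := Ku kw.
have -> : (x^-1 * y^-1 * x * y * w)^-1 = w^-1 * (y^-1 * x^-1 * y * x).
  apply: inv_uniq; first by rewrite !unitrMr ?unitrV.
  rewrite !mulrA (mulrK uw) (mulrK uy) (mulrK ux) (mulrVK uy) mulVr //.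
by apply: cs_mul => //; apply: cs_comm.
Qed.

Lemma cs_conj h z : K h -> comm_sub K z -> comm_sub K (h * z * h^-1).
Proof.
move=> kh cz; have kz := csK cz.
have -> : h * z * h^-1 = (h^-1)^-1 * (z^-1)^-1 * h^-1 * z^-1 * z.
  by rewrite !invrK (mulrVK (Ku kz)).
by constructor; rewrite ?KV.
Qed.

Definition E x y := comm_sub K (x * y^-1).

Lemma E_refl x : K x -> E x x.
Proof. by move=> kx; rewrite /E mulrV ?Ku //; constructor. Qed.

Lemma E_sym x y : K x -> K y -> E x y -> E y x.
Proof.
move=> kx ky /cs_inv; rewrite /E invrM ?unitrV ?Ku // invrK //.
Qed.

Lemma E_trans x y z : K x -> K y -> K z -> E x y -> E y z -> E x z.
Proof.
move=> kx ky kz exy eyz; have := cs_mul exy eyz.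
by rewrite !mulrA (mulrVK (Ku ky)).
Qed.

Lemma E_conj h y : K h -> K y -> E (h * y * h^-1) y.
Proof.
move=> kh ky; rewrite /E.
have -> : h * y * h^-1 * y^-1 = (h^-1)^-1 * (y^-1)^-1 * h^-1 * y^-1 by rewrite !invrK.
by apply: cs_comm; apply: KV.
Qed.

Lemma E_swap x y : K x -> K y -> E (x * y) (y * x).
Proof.
move=> kx ky; rewrite /E invrM ?Ku //.
have -> : x * y * (x^-1 * y^-1) = (x^-1)^-1 * (y^-1)^-1 * x^-1 * y^-1 by rewrite !invrK !mulrA.
by apply: cs_comm; apply: KV.
Qed.

Lemma E_mul x x' y y' : K x -> K x' -> K y -> K y' -> E x x' -> E y y' ->
  E (x * y) (x' * y').
Proof.
move=> kx kx' ky ky' exx eyy; rewrite /E invrM ?Ku //.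
have -> : x * y * (y'^-1 * x'^-1) = (x * (y * y'^-1) * x^-1) * (x * x'^-1).
  by rewrite !mulrA (mulrVK (Ku kx)).
by apply: cs_mul => //; apply: cs_conj.
Qed.
End Comm.

Lemma conjE x : [/\ ea (conj_t x) = ea x, eb (conj_t x) = (eb x %/ 2)%Z,
  ec (conj_t x) = 2 * ec x & ed (conj_t x) = ed x].
Proof. by rewrite conj_tE; apply: mkE. Qed.

Lemma conj_mul x y : ev x -> ev y -> conj_t (x * y) = conj_t x * conj_t y.
Proof.
move=> /dvdzP[kx hx] /dvdzP[ky hy].
case: (mulE x y) => h1 h2 h3 h4.
case: (mulE (conj_t x) (conj_t y)) => k1 k2 k3 k4.
case: (conjE x) => a1 a2 a3 a4; case: (conjE y) => b1 b2 b3 b4.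
case: (conjE (x * y)) => c1 c2 c3 c4.
apply: matP; rewrite ?c1 ?c2 ?c3 ?c4 ?k1 ?k2 ?k3 ?k4 ?a1 ?a2 ?a3 ?a4 ?b1 ?b2 ?b3 ?b4
  ?h1 ?h2 ?h3 ?h4 ?hx ?hy ?mulzK //.
- ring.
- have -> : ea x * (ky * 2) + kx * 2 * ed y = (ea x * ky + kx * ed y) * 2 by ring.
  by rewrite !mulzK.
- ring.
- ring.
Qed.

Lemma conj_SL x : SL2 x -> ev x -> SL2 (conj_t x).
Proof.
move=> sx /dvdzP[k hk]; apply: SLP; case: (conjE x) => -> -> -> ->.
have d := SLdet sx; rewrite hk in d; rewrite hk mulzK // -[RHS]d; ring.
Qed.

Lemma conj_inv x : SL2 x -> ev x -> conj_t (x^-1) = (conj_t x)^-1.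
Proof.
move=> sx ex; rewrite (invE (conj_SL sx ex)) (invE sx).
move: ex => /dvdzP[k hk].
case: (conjE (adj2 x)) => c1 c2 c3 c4.
case: (mkE (ed (conj_t x)) (- eb (conj_t x)) (- ec (conj_t x)) (ea (conj_t x))) => k1 k2 k3 k4.
case: (mkE (ed x) (- eb x) (- ec x) (ea x)) => a1 a2 a3 a4.
case: (conjE x) => b1 b2 b3 b4.
apply: matP; rewrite ?c1 ?c2 ?c3 ?c4 /adj2 ?k1 ?k2 ?k3 ?k4 ?a1 ?a2 ?a3 ?a4 ?b1 ?b2 ?b3 ?b4 //.
- by rewrite hk -mulNr !mulzK.
- ring.
Qed.

Lemma PX n k : ((n ^ k)%N%:Z) = (n%:Z) ^+ k.
Proof. by rewrite -!natz natrX. Qed.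

Lemma cong_trans m a b c : (m %| a - b)%Z -> (m %| b - c)%Z -> (m %| a - c)%Z.
Proof. by move=> h1 h2; have := dvdzD h1 h2; rewrite addrA subrK. Qed.

Lemma cong_mul m a a' b b' : (m %| a - a')%Z -> (m %| b - b')%Z ->
  (m %| a * b - a' * b')%Z.
Proof.
move=> h1 h2; have -> : a * b - a' * b' = a * (b - b') + (a - a') * b' by ring.
by apply: dvdzD; [apply: dvdz_mull | apply: dvdz_mulr].
Qed.

Lemma geom (x : int) n : exists a e : int, a * (1 + x) = 1 + e * x ^+ n.
Proof.
elim: n => [|n [a [e h]]]; first by exists 0, (-1); rewrite expr0; ring.
exists (a - e * x ^+ n), (- e); rewrite exprS mulrBl h; ring.
Qed.

Section PhiSec.
Variables (N r s : nat).
Hypotheses (oddN : odd N) (Npos : (0 < N)%N) (hs : (2 <= s)%N) (hsr : (s <= r)%N).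

Lemma f1 : (2 %| (N * 2 ^ s)%N%:Z)%Z.
Proof.
rewrite dvdzE /=; apply: dvdn_mull.
by case: s hs => [|s'] // _; rewrite expnS dvdn_mulr.
Qed.
Lemma f2 : ((N * 2 ^ s)%N%:Z %| (N * 2 ^ r)%N%:Z)%Z.
Proof. by rewrite dvdzE /= dvdn_pmul2l // dvdn_exp2l. Qed.
Lemma f3 : ((2 ^ r)%N%:Z %| (N * 2 ^ r)%N%:Z)%Z.
Proof. by rewrite dvdzE /= dvdn_mull. Qed.
Lemma f4 : ((2 ^ s)%N%:Z %| (N * 2 ^ s)%N%:Z)%Z.
Proof. by rewrite dvdzE /= dvdn_mull. Qed.
Lemma f5 : (N%:Z %| (N * 2 ^ s)%N%:Z)%Z.
Proof. by rewrite dvdzE /= dvdn_mulr. Qed.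
Lemma cop : coprimez N%:Z (2 ^ r)%N%:Z.
Proof. by rewrite coprimezE /= coprimeXr // coprimen2. Qed.
Lemma f6 : (2 %| (2 ^ r)%N%:Z)%Z.
Proof.
rewrite dvdzE /=; have : (1 <= r)%N by apply: leq_trans hsr; apply: leq_trans hs.
by case: r => [|r'] // _; rewrite expnS dvdn_mulr.
Qed.

Local Notation P := (Phi N r s).
Local Notation G1 := (Gamma1 (N * 2 ^ r)).
Local Notation K := (sub0up2 (Phi N r s)).

Lemma PS x : P x -> SL2 x.
Proof. by case/andP=> /and4P[]. Qed.
Lemma Pa x : P x -> (2 %| ea x - 1)%Z.
Proof. by case/andP=> /and4P[_ _ h _] _; apply: dvdz_trans f1 h. Qed.
Lemma Pd x : P x -> (2 %| ed x - 1)%Z.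
Proof. by case/andP=> /and4P[_ _ _ h] _; apply: dvdz_trans f1 h. Qed.
Lemma Pc x : P x -> ((2 ^ r)%N%:Z %| ec x)%Z.
Proof. by case/andP=> _ /andP[]. Qed.

Lemma G1P x : G1 x -> P x.
Proof.
case/and4P=> sx cx ax dx; rewrite /Phi /Gamma1 /Gamma0 sx /=.
by rewrite !(dvdz_trans f2) // (dvdz_trans f3).
Qed.

Lemma G1T : Gamma1 (N * 2 ^ r) Tm.
Proof.
by rewrite /Gamma1 SLT; case: (mkE 1 1 0 1) => -> _ -> ->; rewrite subrr dvdz0.
Qed.
Lemma PT : P Tm.
Proof. exact: G1P G1T. Qed.

Lemma G1S x : G1 x -> SL2 x.
Proof. by case/and4P. Qed.
Lemma G1a x : G1 x -> (2 %| ea x - 1)%Z.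
Proof. by move/G1P/Pa. Qed.
Lemma G1d x : G1 x -> (2 %| ed x - 1)%Z.
Proof. by move/G1P/Pd. Qed.

Lemma up2M x y : Gamma0up2 x -> Gamma0up2 y -> Gamma0up2 (x * y).
Proof.
case/andP=> sx bx /andP[sy yb]; rewrite /Gamma0up2 SLM //=.
by case: (mulE x y) => _ -> _ _; dz.
Qed.
Lemma up2V x : Gamma0up2 x -> Gamma0up2 x^-1.
Proof.
case/andP=> sx bx; rewrite /Gamma0up2 SLV //=.
by case: (invEs sx) => _ -> _ _; rewrite dvdzN.
Qed.

Lemma KM x y : K x -> K y -> K (x * y).
Proof. by case/andP=> ? ? /andP[? ?]; rewrite /sub0up2 PhiM ?up2M. Qed.
Lemma KV x : K x -> K x^-1.
Proof. by case/andP=> ? ?; rewrite /sub0up2 PhiV ?up2V. Qed.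
Lemma K1 : K 1.
Proof. by rewrite /sub0up2 Phione /Gamma0up2 SL1; case: oneE => _ -> _ _; rewrite dvdz0. Qed.
Lemma KS x : K x -> SL2 x.
Proof. by case/andP=> /PS. Qed.
Lemma Kev' x : K x -> ev x.
Proof. by case/andP=> _ /andP[]. Qed.
Lemma KP x : K x -> P x.
Proof. by case/andP. Qed.

Lemma conjP x : K x -> P (conj_t x).
Proof.
case/andP=> /andP[/and4P[sx cx ax dx] /andP[_ cx']] /andP[_ ex].
rewrite /Phi /Gamma1 /Gamma0 conj_SL //=.
case: (conjE x) => -> _ -> ->; rewrite ax dx /=.
by rewrite !dvdz_mull.
Qed.

Lemma cs_conjt z : comm_sub K z -> comm_sub P (conj_t z).
Proof.
elim=> [|x y w kx ky cw IH].
  have -> : conj_t 1 = 1.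
    case: (conjE 1) => a b c d; case: oneE => a' b' c' d'; apply: matP;
      by rewrite ?a ?b ?c ?d ?a' ?b' ?c' ?d' ?mulr0.  
  by constructor.
have kw := csK K1 KM KV cw.
have kx' := KV kx; have ky' := KV ky.
rewrite !conj_mul ?Kev' ?KM //.
rewrite !conj_inv ?KS ?Kev' //.
by constructor => //; apply: conjP.
Qed.

Lemma P1 : P 1. Proof. exact: Phione. Qed.
Lemma PM x y : P x -> P y -> P (x * y). Proof. exact: PhiM. Qed.
Lemma PV x : P x -> P x^-1. Proof. exact: PhiV. Qed.
Lemma ev_mulP x y : P x -> P y -> ev (x * y) = (ev x == ev y).
Proof. exact: (ev_mul P1 Pa Pd PT). Qed.
Lemma KdivP x y : P x -> P y -> K (x * y^-1) = (ev x == ev y).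
Proof. exact: (Kdiv P1 PM PV PS Pa Pd PT). Qed.

Lemma Kof x : P x -> ev x -> K x.
Proof. by move=> px ex; rewrite /sub0up2 /Gamma0up2 px PS. Qed.

Lemma Kconj t y : P t -> K y -> K (t * y * t^-1).
Proof.
move=> pt ky; have py := KP ky; have pty := PM pt py; have pt' := PV pt.
apply: Kof; first exact: PM.
by rewrite ev_mulP // ev_mulP // evV ?PS // (Kev' ky); case: (ev t).
Qed.

Lemma A1 t y : P t -> ev t -> K y -> E K (t * y * t^-1) y.
Proof. by move=> pt et ky; apply: (E_conj KV) => //; apply: Kof. Qed.

Lemma A2 t y : P t -> ~~ ev t -> K y -> E K (t * y * t^-1) (Tm * y * Tm^-1).
Proof.
move=> pt et ky.
have kh : K (t * Tm^-1) by rewrite KdivP ?PT // (negbTE et) (negbTE evT).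
have -> : t * y * t^-1 = (t * Tm^-1) * (Tm * y * Tm^-1) * (t * Tm^-1)^-1.
  have uT := SLu SLT; have ut := SLu (PS pt).
  by rewrite invrM ?unitrV // invrK !mulrA !(mulrVK uT).
by apply: (E_conj KV) => //; apply: Kconj => //; apply: PT.
Qed.

Lemma pairE u v g : P u -> P v -> ev u = ~~ ev v -> K g ->
  E K ((u * g * u^-1) * (v * g * v^-1)) (g * (Tm * g * Tm^-1)).
Proof.
move=> pu pv euv kg.
have kTg : K (Tm * g * Tm^-1) by apply: Kconj => //; apply: PT.
have ku : K (u * g * u^-1) by apply: Kconj.
have kv : K (v * g * v^-1) by apply: Kconj.
case ev_v: (ev v) euv => /= ev_u.
- have e := E_mul K1 KM KV KS ku kTg kv kg (A2 pu ltac:(by rewrite ev_u) kg) (A1 pv ev_v kg).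
  apply: (E_trans KS (KM ku kv) (KM kTg kg) (KM kg kTg) e).
  exact: (E_swap KV KS).
- exact: (E_mul K1 KM KV KS ku kg kv kTg (A1 pu ev_u kg) (A2 pv ltac:(by rewrite ev_v) kg)).
Qed.

Lemma sqE u g : P u -> P g -> ~~ ev g -> E K (u * (g * g) * u^-1) (g * g).
Proof.
move=> pu pg eg.
have kg2 : K (g * g) by apply: Kof; [apply: PM | rewrite ev_mulP // eqxx].
case eu: (ev u); first exact: A1.
have kh : K (u * g^-1) by rewrite KdivP // eu (negbTE eg).
have -> : u * (g * g) * u^-1 = (u * g^-1) * (g * g) * (u * g^-1)^-1.
  have ug := SLu (PS pg); have uu := SLu (PS pu).
  by rewrite invrM ?unitrV // invrK !mulrA (mulrVK ug).
exact: (E_conj KV).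
Qed.

Lemma key T1 T2 : K T1 -> K T2 -> E K T1 T2 -> ab_eq P (conj_t T1) (conj_t T2).
Proof.
move=> k1 k2 e; rewrite /ab_eq -conj_inv ?KS ?Kev' // -conj_mul ?Kev' ?KV //.
exact: cs_conjt.
Qed.

Lemma part1 ts1 ts2 g : right_transv G1 (sub0up2 G1) ts1 ->
  right_transv P K ts2 -> G1 g -> ab_eq P (AtkinU G1 ts1 g) (AtkinU P ts2 g).
Proof.
move=> h1 h2 gg; have pg := G1P gg.
have [u1 [v1 [gu1 gv1 e1 t1]]] :=
  transfer_shape (G1one _) (@G1M _) (@G1V _) G1S G1a G1d G1T h1 gg.
have [u2 [v2 [pu2 pv2 e2 t2]]] := transfer_shape P1 PM PV PS Pa Pd PT h2 pg.
rewrite /AtkinU t1 t2.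
have pu1 := G1P gu1; have pv1 := G1P gv1.
case eg: (ev g).
- have kg := Kof pg eg.
  have kY : K (g * (Tm * g * Tm^-1)) by apply: KM => //; apply: Kconj => //; apply: PT.
  have kT1 : K ((u1 * g * u1^-1) * (v1 * g * v1^-1)) by apply: KM; apply: Kconj.
  have kT2 : K ((u2 * g * u2^-1) * (v2 * g * v2^-1)) by apply: KM; apply: Kconj.
  apply: key => //.
  apply: (E_trans KS kT1 kY kT2 (pairE pu1 pv1 e1 kg)).
  exact: (E_sym K1 KM KV KS kT2 kY (pairE pu2 pv2 e2 kg)).
- have kg2 : K (g * g) by apply: Kof; [apply: PM | rewrite ev_mulP // eqxx].
  have kT1 := Kconj pu1 kg2; have kT2 := Kconj pu2 kg2.
  apply: key => //.
  apply: (E_trans KS kT1 kg2 kT2 (sqE pu1 pg (negbT eg))).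
  exact: (E_sym K1 KM KV KS kT2 kg2 (sqE pu2 pg (negbT eg))).
Qed.

Local Notation R := ((2 ^ r)%N%:Z).

Lemma phiM x y : P x -> P y -> (R %| ed (x * y) - ed x * ed y)%Z.
Proof.
move=> px py; case: (mulE x y) => _ _ _ ->.
have -> : ec x * eb y + ed x * ed y - ed x * ed y = ec x * eb y by ring.
by apply: dvdz_mulr; apply: Pc.
Qed.

Lemma detc x : P x -> (R %| ea x * ed x - 1)%Z.
Proof.
move=> px; have := SLdet (PS px) => h.
have -> : ea x * ed x - 1 = eb x * ec x by rewrite -h; ring.
by apply: dvdz_mull; apply: Pc.
Qed.

Lemma phiConj u y : P u -> P y -> (R %| ed (u * y * u^-1) - ed y)%Z.
Proof.
move=> pu py.
have c1 := phiM (PM pu py) (PV pu).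
have r0 : (R %| ed u^-1 - ed u^-1)%Z by rewrite subrr dvdz0.
have c2 := cong_mul (phiM pu py) r0.
apply: (cong_trans c1); apply: (cong_trans c2).
case: (invEs (PS pu)) => _ _ _ ->.
have -> : ed u * ed y * ea u - ed y = ed y * (ea u * ed u - 1) by ring.
by apply: dvdz_mull; apply: detc.
Qed.

Lemma part5 ts g : right_transv P K ts -> P g ->
  (ed (AtkinU P ts g) = ed g ^+ 2 %[mod R])%Z.
Proof.
move=> h pg; apply/eqP; rewrite eqz_mod_dvd.
have [u [v [pu pv _ t]]] := transfer_shape P1 PM PV PS Pa Pd PT h pg.
rewrite /AtkinU; case: (conjE (transfer K ts g)) => _ _ _ ->; rewrite t expr2.
case: (ev g).
- have pA : P (u * g * u^-1) by apply: PM; [apply: PM | apply: PV].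
  have pB : P (v * g * v^-1) by apply: PM; [apply: PM | apply: PV].
  apply: (cong_trans (phiM pA pB)).
  exact: cong_mul (phiConj pu pg) (phiConj pv pg).
- apply: (cong_trans (phiConj pu (PM pg pg))).
  exact: phiM.
Qed.

Lemma part2a g : P g -> (ed g = 1 %[mod (2 ^ s)%N%:Z])%Z.
Proof.
move=> /andP[/and4P[_ _ _ h] _]; apply/eqP; rewrite eqz_mod_dvd.
exact: dvdz_trans f4 h.
Qed.

Lemma part2b g h : P g -> P h -> (ed (g * h) = ed g * ed h %[mod R])%Z.
Proof. by move=> pg ph; apply/eqP; rewrite eqz_mod_dvd; apply: phiM. Qed.

Lemma csphi z : comm_sub P z -> P z /\ (R %| ed z - 1)%Z.
Proof.
elim=> [|x y w px py _ [pw IH]].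
  by split; [apply: P1 | case: oneE => _ _ _ ->; rewrite subrr dvdz0].
have e : x^-1 * y^-1 * x * y * w = x^-1 * (y^-1 * x * y^-1^-1) * w.
  by rewrite invrK !mulrA.
rewrite e.
have pC : P (y^-1 * x * y^-1^-1) by apply: PM; [apply: PM; [apply: PV|] | apply: PV; apply: PV].
have pxC : P (x^-1 * (y^-1 * x * y^-1^-1)) by apply: PM => //; apply: PV.
split; first by apply: PM.
have cC := phiConj (PV py) px.
have c1 : (R %| ed (x^-1 * (y^-1 * x * y^-1^-1)) - 1)%Z.
  apply: (cong_trans (phiM (PV px) pC)).
  have r0 : (R %| ed x^-1 - ed x^-1)%Z by rewrite subrr dvdz0.
  apply: (cong_trans (cong_mul r0 cC)).
  by case: (invEs (PS px)) => _ _ _ ->; apply: detc.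
apply: (cong_trans (phiM pxC pw)).
by have := cong_mul c1 IH; rewrite mulr1.
Qed.

Lemma part3 g : P g ->
  (ed g = 1 %[mod R])%Z <-> exists k, G1 k /\ ab_eq P g k.
Proof.
move=> pg; split.
- move/eqP; rewrite eqz_mod_dvd => hd.
  exists g; split; last by rewrite /ab_eq mulrV ?SLu ?PS //; constructor.
  move: (pg) => /andP[/and4P[sg cg ag dg] /andP[_ cg']].
  rewrite /Gamma1 sg PoszM !Gauss_dvdz ?cop //.
  rewrite !(dvdz_trans f5) //= hd cg' /= andbT.
  have -> : ea g - 1 = - ea g * (ed g - 1) + (ea g * ed g - 1) by ring.
  by apply: dvdzD; [apply: dvdz_mull | apply: detc].
- case=> k [gk ab]; apply/eqP; rewrite eqz_mod_dvd.
  have [pgk c1] := csphi ab; have pk := G1P gk.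
  have c2 : (R %| ed k - 1)%Z.
    by move: gk => /and4P[_ _ _ h]; apply: dvdz_trans h; rewrite PoszM dvdz_mull.
  have -> : g = g * k^-1 * k by rewrite mulrVK ?SLu ?PS.
  apply: (cong_trans (phiM pgk pk)).
  by have := cong_mul c1 c2; rewrite mulr1.
Qed.

Lemma part4 u : (u = 1 %[mod (2 ^ s)%N%:Z])%Z ->
  exists g, P g /\ (ed g = u %[mod R])%Z.
Proof.
move/eqP; rewrite eqz_mod_dvd => /dvdzP[q hq].
have [[al be] /= hab] := coprimezP _ _ cop.
set x := al * N%:Z * (u - 1).
have hx : ((N * 2 ^ s)%N%:Z %| x)%Z.
  by apply/dvdzP; exists (al * q); rewrite /x hq PoszM; ring.
have [a [e hae]] := geom x r.
have r0 : (0 < r)%N by apply: leq_trans hsr; apply: leq_trans hs.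
exists (mk a e (x ^+ r) (1 + x)).
case: (mkE a e (x ^+ r) (1 + x)) => ha hb hc hd.
split.
- have sg : SL2 (mk a e (x ^+ r) (1 + x)).
    by apply: SLP; rewrite ha hb hc hd hae; ring.
  rewrite /Phi /Gamma1 /Gamma0 sg ha hc hd /=.
  have hxr : ((N * 2 ^ s)%N%:Z %| x ^+ r)%Z by apply: dvdz_exp.
  have -> : 1 + x - 1 = x by ring.
  rewrite hxr hx /=.
  apply/andP; split.
    have -> : a - 1 = - a * x + e * x ^+ r.
      by have := hae; rewrite mulrDr mulr1 => h; rewrite -[a in LHS](addrK (a * x)) h; ring.
    by rewrite andbT; apply: dvdzD; apply: dvdz_mull.
  rewrite PX; apply: dvdz_exp2r.
  exact: dvdz_trans f1 hx.
- apply/eqP; rewrite eqz_mod_dvd hd.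
  have -> : 1 + x - u = (u - 1) * (al * N%:Z - 1) by rewrite /x; ring.
  have -> : al * N%:Z - 1 = - (be * R) by rewrite -hab; ring.
  by apply: dvdz_mull; rewrite dvdzN dvdz_mull.
Qed.

End PhiSec.

Unset Implicit Arguments.
Theorem lemma3p4 (N r s : nat) (oddN : odd N) (Npos : (0 < N)%N)
    (hs : (2 <= s)%N) (hsr : (s <= r)%N) :
  let G1 := Gamma1 (N * 2 ^ r) in
  let P := Phi N r s in
  (* (i) inclusion Gamma_1(N 2^r)^ab -> (Phi_r^s)^ab commutes with U *)
  (forall ts1 ts2 : seq Mat,
     right_transv G1 (sub0up2 G1) ts1 ->
     right_transv P (sub0up2 P) ts2 ->
     forall g, G1 g -> ab_eq P (AtkinU G1 ts1 g) (AtkinU P ts2 g)) /\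
  (* (ii) g |-> d mod Gamma_r lands in Gamma_s/Gamma_r and is multiplicative *)
  (forall g, P g -> (ed g = 1 %[mod (2 ^ s)%N%:Z])%Z) /\
  (forall g h, P g -> P h ->
     (ed (g * h) = ed g * ed h %[mod (2 ^ r)%N%:Z])%Z) /\
  (* (iii) its kernel on (Phi_r^s)^ab is exactly the image of Gamma_1(N2^r)^ab *)
  (forall g, P g ->
     (ed g = 1 %[mod (2 ^ r)%N%:Z])%Z <-> exists k, G1 k /\ ab_eq P g k) /\
  (* (iv) it is surjective onto Gamma_s/Gamma_r *)
  (forall u : int, (u = 1 %[mod (2 ^ s)%N%:Z])%Z ->
     exists g, P g /\ (ed g = u %[mod (2 ^ r)%N%:Z])%Z) /\
  (* (v) the endomorphism induced by U on Gamma_s/Gamma_r is x |-> x^2 *)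
  (forall ts : seq Mat, right_transv P (sub0up2 P) ts ->
     forall g, P g -> (ed (AtkinU P ts g) = ed g ^+ 2 %[mod (2 ^ r)%N%:Z])%Z).
Proof.
move=> G1 P; rewrite {}/G1 {}/P.
split; [|split; [|split; [|split; [|split]]]].
- move=> ts1 ts2 h1 h2 g hg; exact: (part1 Npos hs hsr h1 h2 hg).
- move=> g hg; exact: (part2a hg).
- move=> g h hg hh; exact: (part2b hg hh).
- move=> g hg; exact: (part3 oddN Npos hsr hg).
- move=> u hu; exact: (part4 oddN hs hsr hu).
- move=> ts h g hg; exact: (part5 Npos hs hsr h hg).
Qed.
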